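(* Let $I$ be an instance of the multicommodity flow feasibility problem: a directed graph $D=(V,A)$, capacities $u\in\mathbb{R}_+^A$, and commodities $K=\{1,\dots,k\}$, commodity $i$ having source $s_i\in V$, sink $t_i\in V$ and demand $d_i\ge0$. Construct the instance $I'$ of the robust path flow problem as follows: add a super source $s$ and super sink $t$; for each $i\in K$ add arcs $a_i=(s,s_i)$ and $z_i=(t_i,t)$ with $u_{a_i}=u_{z_i}=d_i$ and $c_{a_i}=c_{z_i}=i$; add an arc $e^*=(s,t)$ with $u_{e^*}=1$ and $c_{e^*}=k+1$; set $c_e=\infty$ for all $e\in A$ (original arcs keep capacities $u_e$); and set $B_I=\sum_{i\in K}i\,d_i$. Then there is a multicommodity flow in $D$ respecting the capacities $u$ and routing $d_i$ units from $s_i$ to $t_i$ for every $i\in K$ if and only if in $I'$ there is a feasible path flow $x$ with $\min_{z\in\Omega}\mathrm{val}(x,z)=1$.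
   Context: Robust path flow problem on a directed (multi)graph $D'=(V',A')$ with source $s$, sink $t$, capacities $u$, interdiction costs $c_e\in\mathbb{R}_+\cup\{\infty\}$ and interdictor budget $B_I$: $\mathcal{P}$ is the set of $s$-$t$-paths, the flow player picks $x\in X=\{x\in\mathbb{R}_+^{\mathcal{P}}:\sum_{P\ni e}x_P\le u_e\ \forall e\in A'\}$, the interdictor then picks $z\in\Omega=\{z\in\mathbb{R}_+^{A'\times\mathcal{P}}:\sum_{e\in A'}c_e\sum_{P\ni e}z_{e,P}\le B_I\}$ (with cost $\infty$ meaning flow cannot be stolen at that arc, i.e. $z_{e,P}=0$ whenever $c_e=\infty$), and $\mathrm{val}(x,z)=\sum_{P\in\mathcal{P}}(x_P-\sum_{e\in P}z_{e,P})^+$. The flow player's profit from $x$ is $\min_{z\in\Omega}\mathrm{val}(x,z)$. *)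

(* Defs.v *)
From HB Require Import structures.
From mathcomp Require Import all_boot all_order all_algebra.
From mathcomp Require Import reals.
Set Implicit Arguments. Unset Strict Implicit. Unset Printing Implicit Defensive.
Import Order.TTheory GRing.Theory Num.Theory.
Local Open Scope ring_scope.

Section Paths.
Variables (V A : finType) (tl hd : A -> V).

Fixpoint walkb (v : V) (p : seq A) (t : V) : bool :=
  match p with
  | [::] => v == t
  | e :: p' => (tl e == v) && walkb (hd e) p' t
  end.

Definition is_st_path (s t : V) (p : seq A) : bool :=
  walkb s p t && uniq (s :: map hd p).

Definition short_seqs (n : nat) : seq (seq A) :=
  flatten [seq [seq val tp | tp : m.-tuple A] | m <- iota 0 n].

(* the (finite) set of s-t paths, as a duplicate-free list
   (a simple path has fewer than #|V| arcs) *)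
Definition stpaths (s t : V) : seq (seq A) :=
  [seq p <- short_seqs #|V| | is_st_path s t p].
End Paths.

Section Robust.
Variables (R : realType) (V A : finType) (tl hd : A -> V) (s t : V).
Variables (u : A -> R) (c : A -> option R) (* None = infinite interdiction cost *)
          (BI : R).

Local Notation P := (stpaths tl hd s t).

(* x : R_+^P respecting capacities (values of x off P are irrelevant) *)
Definition feasible_pathflow (x : seq A -> R) : Prop :=
  (forall p, p \in P -> 0 <= x p) /\
  (forall e, \sum_(p <- P | e \in p) x p <= u e).

Definition in_Omega (z : A -> seq A -> R) : Prop :=
  (forall e p, p \in P -> 0 <= z e p) /\
  (forall e p, p \in P -> c e = None -> z e p = 0) /\
  \sum_(e : A) odflt 0 (c e) * \sum_(p <- P | e \in p) z e p <= BI.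

Definition val (x : seq A -> R) (z : A -> seq A -> R) : R :=
  \sum_(p <- P) Num.max 0 (x p - \sum_(e <- p) z e p).

Definition min_val_eq (x : seq A -> R) (v : R) : Prop :=
  (exists z, in_Omega z /\ val x z = v) /\
  (forall z, in_Omega z -> v <= val x z).
End Robust.

Definition mcf_feasible (R : realType) (V A : finType) (tl hd : A -> V)
  (u : A -> R) (k : nat) (src snk : 'I_k -> V) (d : 'I_k -> R) : Prop :=
  exists f : 'I_k -> seq A -> R,
    (forall i p, p \in stpaths tl hd (src i) (snk i) -> 0 <= f i p) /\
    (forall i, \sum_(p <- stpaths tl hd (src i) (snk i)) f i p = d i) /\
    (forall e, \sum_(i < k) \sum_(p <- stpaths tl hd (src i) (snk i) | e \in p) f i p
               <= u e).

(* vertices: inl v (original), inr true = super source s, inr false = super sink t *)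
Definition Vp (V : finType) : finType := (V + bool)%type.
(* arcs: inl e (original), inr (inl i) = a_i, inr (inr (inl i)) = z_i,
   inr (inr (inr tt)) = e* *)
Definition Ap (A : finType) (k : nat) : finType := (A + ('I_k + ('I_k + unit)))%type.

Section Reduction.
Variables (R : realType) (V A : finType) (tl hd : A -> V) (u : A -> R)
          (k : nat) (src snk : 'I_k -> V) (d : 'I_k -> R).

Definition sS : Vp V := inr true.
Definition tT : Vp V := inr false.

Definition tlp (e : Ap A k) : Vp V :=
  match e with
  | inl a => inl (tl a)
  | inr (inl i) => sS
  | inr (inr (inl i)) => inl (snk i)
  | inr (inr (inr _)) => sS
  end.

Definition hdp (e : Ap A k) : Vp V :=
  match e with
  | inl a => inl (hd a)
  | inr (inl i) => inl (src i)
  | inr (inr (inl i)) => tT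
  | inr (inr (inr _)) => tT
  end.

Definition up (e : Ap A k) : R :=
  match e with
  | inl a => u a
  | inr (inl i) => d i
  | inr (inr (inl i)) => d i
  | inr (inr (inr _)) => 1
  end.

(* commodity i : 'I_k is the paper's commodity i+1 *)
Definition cp (e : Ap A k) : option R :=
  match e with
  | inl a => None
  | inr (inl i) => Some (i.+1)%:R
  | inr (inr (inl i)) => Some (i.+1)%:R
  | inr (inr (inr _)) => Some (k.+1)%:R
  end.

Definition BIp : R := \sum_(i < k) (i.+1)%:R * d i.
End Reduction.

(* Main.v *)
Require Import Defs.
From HB Require Import structures.
From mathcomp Require Import all_boot all_order all_algebra.
From mathcomp Require Import reals.
From mathcomp Require Import ring lra.
Set Implicit Arguments. Unset Strict Implicit. Unset Printing Implicit Defensive.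
Import Order.TTheory GRing.Theory Num.Theory.
Local Open Scope ring_scope.

Lemma uniq_flatten_disj (T I : eqType) (s : seq I) (F : I -> seq T) :
  uniq s -> (forall i, uniq (F i)) ->
  (forall i j x, x \in F i -> x \in F j -> i = j) ->
  uniq (flatten (map F s)).
Proof.
move=> us uF dF; elim: s us => [|i s IH] //= /andP[nis us].
rewrite cat_uniq uF IH // andbT; apply/hasPn => x /flatten_mapP[j js xj].
apply/negP => xi; have eij := dF _ _ _ xi xj; by rewrite eij js in nis.
Qed.

Section G.
Variables (V A : finType) (tl hd : A -> V).

Lemma short_seqsP n p : (p \in short_seqs A n) = (size p < n)%N.
Proof.
apply/flatten_mapP/idP => [[m]|sp].
  rewrite mem_iota add0n => /andP[_ mn] /mapP[tp _ ->]; by rewrite size_tuple.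
exists (size p); first by rewrite mem_iota add0n sp.
apply/mapP; exists (in_tuple p) => //; by rewrite mem_enum.
Qed.

Lemma short_seqs_uniq n : uniq (short_seqs A n).
Proof.
apply: uniq_flatten_disj; first exact: iota_uniq.
  move=> m; rewrite map_inj_uniq ?enum_uniq //; exact: val_inj.
move=> i j x /mapP[t1 _ ->] /mapP[t2 _ e]; by rewrite -(size_tuple t1) e size_tuple.
Qed.

Lemma st_path_size s t p : is_st_path tl hd s t p -> (size p < #|V|)%N.
Proof.
case/andP=> _ u; move/card_uniqP: u => /= c.
have := max_card (mem (s :: map hd p)); by rewrite c /= size_map.
Qed.

Lemma mem_stpaths s t p : (p \in stpaths tl hd s t) = is_st_path tl hd s t p.
Proof.
rewrite mem_filter short_seqsP; apply/andP/idP => [[]//|h]; split=> //.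
exact: st_path_size h.
Qed.

Lemma stpaths_uniq s t : uniq (stpaths tl hd s t).
Proof. by rewrite filter_uniq // short_seqs_uniq. Qed.

Lemma st_path_uniq s t p : is_st_path tl hd s t p -> uniq p.
Proof. by case/andP=> _ /= /andP[_ /map_uniq]. Qed.

Lemma walkb_cat v p q t :
  walkb tl hd v (p ++ q) t =
  walkb tl hd v p (last v (map hd p)) && walkb tl hd (last v (map hd p)) q t.
Proof.
elim: p v => [|e p IH] v /=; first by rewrite eqxx.
by rewrite IH andbA.
Qed.
End G.
Section Red.
Variables (R : realType) (V A : finType) (tl hd : A -> V) (u : A -> R)
          (k : nat) (src snk : 'I_k -> V) (d : 'I_k -> R).

Local Notation A' := (Ap A k).
Local Notation V' := (Vp V).
Local Notation tl' := (tlp tl snk).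
Local Notation hd' := (hdp hd src).
Local Notation P' := (stpaths tl' hd' (sS V) (tT V)).
Local Notation S i j := (stpaths tl hd (src i) (snk j)).

Definition aa (i : 'I_k) : A' := inr (inl i).
Definition zz (j : 'I_k) : A' := inr (inr (inl j)).
Definition es : A' := inr (inr (inr tt)).
Definition ol (a : A) : A' := inl a.
Definition emb i j (p : seq A) : seq A' := aa i :: map ol p ++ [:: zz j].
Definition getl (e : A') : option A := match e with inl a => Some a | _ => None end.
Definition dec (P : seq A') := pmap getl P.
Definition fidx (P : seq A') : option 'I_k :=
  match P with inr (inl i) :: _ => Some i | _ => None end.
Definition lidx (P : seq A') : option 'I_k :=
  match last es P with inr (inr (inl j)) => Some j | _ => None end.

Lemma dec_emb i j p : dec (emb i j p) = p.
Proof. rewrite /dec /emb /= pmap_cat /=; elim: p => [|a p IH] //=; by rewrite IH. Qed.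
Lemma fidx_emb i j p : fidx (emb i j p) = Some i. Proof. by []. Qed.
Lemma lidx_emb i j p : lidx (emb i j p) = Some j.
Proof. by rewrite /lidx /emb /= last_cat. Qed.

Lemma walk_emb v j p :
  walkb tl' hd' (inl v) (map ol p ++ [:: zz j]) (tT V) = walkb tl hd v p (snk j).
Proof.
elim: p v => [|a p IH] v /=.
  by rewrite /tT eqxx andbT eq_sym.
by rewrite IH.
Qed.

Lemma emb_pathE i j p :
  is_st_path tl' hd' (sS V) (tT V) (emb i j p) = is_st_path tl hd (src i) (snk j) p.
Proof.
rewrite /is_st_path /emb /= walk_emb; congr (_ && _).
have -> : map hd' (map ol p ++ [:: zz j]) = map inl (map hd p) ++ [:: tT V].
  by rewrite map_cat -!map_comp.
have hr : forall b (L : seq V), (inr b \in (map inl L : seq V')) = false.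
  by move=> b L; apply/mapP => [[]].
have key : uniq (sS V :: map inl (src i :: map hd p) ++ [:: tT V]) = uniq (src i :: map hd p).
  rewrite cons_uniq mem_cat (_ : (sS V \in _) = false); last by apply/mapP => [[]].
  rewrite /= cat_uniq map_inj_uniq; last by move=> x y [].
  have inj : injective (inl : V -> V') by move=> x y [].
  rewrite (_ : has _ _ = false) ?andbT /=; last by rewrite orbF; apply/mapP => [[]].
  rewrite mem_cat mem_map // in_cons in_nil orbF (_ : (inl (src i) == tT V) = false) ?orbF //.
exact: key.
Qed.

Lemma tl_ne_t (f : A') : (tl' f == tT V) = false.
Proof. by case: f => [a|[i|[j|[]]]]. Qed.

Lemma walk_t r : walkb tl' hd' (tT V) r (tT V) -> r = [::].
Proof. by case: r => [|f r] //= /andP[]; rewrite tl_ne_t. Qed.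

Lemma walk_dec v r : walkb tl' hd' (inl v) r (tT V) ->
  exists j p, r = map ol p ++ [:: zz j].
Proof.
elim: r v => [|f r IH] v //=.
case: f => [a|[i|[j|[]]]] /=.
- move=> /andP[_ w]; by have [j [p ->]] := IH _ w; exists j, (a :: p).
- by [].
- move=> /andP[_ w]; by rewrite (walk_t w); exists j, [::].
- by [].
Qed.

Lemma path_cases P : P \in P' ->
  P = [:: es] \/ exists i j p, P = emb i j p /\ p \in S i j.
Proof.
rewrite mem_stpaths; case: P => [|e r]; first by [].
case: e => [a|[i|[j|[]]]] h.
- by move: h => /andP[/andP[]].
- right; move: (h) => /andP[/andP[_ w] _].
  have [j [p er]] := walk_dec w.
  exists i, j, p; split; first by rewrite er.
  by rewrite mem_stpaths -emb_pathE /emb -er.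
- by move: h => /andP[/andP[]].
- left; move: h => /andP[/andP[_ w] _]; by rewrite (walk_t w).
Qed.

Definition Lst := flatten [seq map (emb ij.1 ij.2) (S ij.1 ij.2) | ij <- enum {: 'I_k * 'I_k}].

Lemma emb_inj i j : injective (emb i j).
Proof. by move=> p q e; rewrite -(dec_emb i j p) e dec_emb. Qed.

Lemma es_in : [:: es] \in P'.
Proof. by rewrite mem_stpaths. Qed.

Lemma emb_in i j p : p \in S i j -> emb i j p \in P'.
Proof. by rewrite !mem_stpaths emb_pathE. Qed.

Lemma mem_Lst P : (P \in Lst) = [exists ij : 'I_k * 'I_k, P \in map (emb ij.1 ij.2) (S ij.1 ij.2)].
Proof.
apply/flatten_mapP/existsP => [[ij _ h]|[ij h]]; exists ij => //; by rewrite mem_enum.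
Qed.

Lemma perm_P' : perm_eq P' ([:: es] :: Lst).
Proof.
apply: uniq_perm; first exact: stpaths_uniq.
  rewrite cons_uniq; apply/andP; split.
    by rewrite mem_Lst; apply/existsP => [[ij /mapP[p _]]].
  apply: uniq_flatten_disj; first exact: enum_uniq.
    by move=> ij; rewrite map_inj_uniq ?stpaths_uniq //; exact: emb_inj.
  move=> [i j] [i' j'] x /mapP[p _ ->] /mapP[q _ e] /=.
  have := congr1 fidx e; have := congr1 lidx e.
  by rewrite !fidx_emb !lidx_emb => -[->] [->].
move=> P; rewrite in_cons mem_Lst; apply/idP/idP.
  case/path_cases => [->|[i [j [p [-> ps]]]]]; first by rewrite eqxx.
  apply/orP; right; apply/existsP; exists (i, j); exact: map_f.
case/orP => [/eqP ->|/existsP[[i j] /mapP[p ps ->]]]; first exact: es_in.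
exact: emb_in.
Qed.

Lemma decomp (G : seq A' -> R) :
  \sum_(P <- P') G P = G [:: es] + \sum_(i < k) \sum_(j < k) \sum_(p <- S i j) G (emb i j p).
Proof.
rewrite (perm_big _ perm_P') big_cons; congr (_ + _).
rewrite big_flatten big_map big_enum /= pair_big /=.
apply: eq_bigr => ij _; by rewrite big_map.
Qed.

Lemma in_emb_ol a i j p : (ol a \in emb i j p) = (a \in p).
Proof.
rewrite /emb in_cons mem_cat mem_seq1 /= orbF.
by rewrite mem_map //; move=> x y [].
Qed.
Lemma in_emb_aa i' i j p : (aa i' \in emb i j p) = (i' == i).
Proof.
rewrite /emb in_cons mem_cat mem_seq1 /=.
have -> : (aa i' \in map ol p) = false by apply/mapP => [[]].
rewrite orbF /aa /=. by apply/eqP/eqP => [[]|->].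
Qed.
Lemma in_emb_zz j' i j p : (zz j' \in emb i j p) = (j' == j).
Proof.
rewrite /emb in_cons mem_cat mem_seq1 /=.
have -> : (zz j' \in map ol p) = false by apply/mapP => [[]].
rewrite /zz /=. by apply/eqP/eqP => [[]|->].
Qed.
Lemma in_emb_es i j p : (es \in emb i j p) = false.
Proof.
rewrite /emb in_cons mem_cat mem_seq1 /=.
by have -> : (es \in map ol p) = false by apply/mapP => [[]].
Qed.

Lemma sum_emb (F : A' -> R) i j p :
  \sum_(e <- emb i j p) F e = F (aa i) + \sum_(a <- p) F (ol a) + F (zz j).
Proof. by rewrite big_cons big_cat big_map big_seq1 addrA. Qed.

Lemma sum_if (T : Type) (b : bool) (r : seq T) (Q : pred T) (F : T -> R) :
  \sum_(p <- r | Q p) (if b then F p else 0) = if b then \sum_(p <- r | Q p) F p else 0.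
Proof. by case: b => //; rewrite big1. Qed.

Lemma sum_pick (F : 'I_k -> R) i0 : \sum_(j < k) (if i0 == j then F j else 0) = F i0.
Proof.
rewrite -big_mkcond /=.
by rewrite (eq_bigl (fun j => j == i0)) ?big_pred1_eq // => j; rewrite eq_sym.
Qed.

Lemma arc_sum_aa (x : seq A' -> R) i0 :
  \sum_(P <- P' | aa i0 \in P) x P = \sum_(j < k) \sum_(p <- S i0 j) x (emb i0 j p).
Proof.
rewrite big_mkcond decomp /= ?add0r.
rewrite (eq_bigr (fun i => if i0 == i then \sum_(j < k) \sum_(p <- S i j) x (emb i j p) else 0)).
  exact: (sum_pick (fun i => \sum_(j < k) \sum_(p <- S i j) x (emb i j p))).
move=> i _; case: (eqVneq i0 i) => [<-|ne].
  by apply: eq_bigr => j _; apply: eq_bigr => p _; rewrite in_emb_aa eqxx.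
rewrite big1 // => j _; rewrite big1 // => p _; by rewrite in_emb_aa (negbTE ne).
Qed.

Lemma arc_sum_zz (x : seq A' -> R) j0 :
  \sum_(P <- P' | zz j0 \in P) x P = \sum_(i < k) \sum_(p <- S i j0) x (emb i j0 p).
Proof.
rewrite big_mkcond decomp /= ?add0r.
apply: eq_bigr => i _.
rewrite (eq_bigr (fun j => if j0 == j then \sum_(p <- S i j) x (emb i j p) else 0)).
  exact: (sum_pick (fun j => \sum_(p <- S i j) x (emb i j p))).
move=> j _; case: (eqVneq j0 j) => [<-|ne].
  by apply: eq_bigr => p _; rewrite in_emb_zz eqxx.
rewrite big1 // => p _; by rewrite in_emb_zz (negbTE ne).
Qed.

Lemma arc_sum_es (x : seq A' -> R) :
  \sum_(P <- P' | es \in P) x P = x [:: es].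
Proof.
rewrite big_mkcond decomp /= big1 ?addr0 // => i _.
rewrite big1 // => j _; rewrite big1 // => p _; by rewrite in_emb_es.
Qed.

Lemma arc_sum_ol (x : seq A' -> R) a :
  \sum_(P <- P' | ol a \in P) x P =
  \sum_(i < k) \sum_(j < k) \sum_(p <- S i j | a \in p) x (emb i j p).
Proof.
rewrite big_mkcond decomp /= ?add0r.
apply: eq_bigr => i _; apply: eq_bigr => j _; rewrite [RHS]big_mkcond.
by apply: eq_bigr => p _; rewrite in_emb_ol.
Qed.

Definition cc (e : A') : R := odflt 0 (@cp R A k e).

Lemma path_uniq P : P \in P' -> uniq P.
Proof. rewrite mem_stpaths; exact: st_path_uniq. Qed.

Lemma budget_paths (z : A' -> seq A' -> R) :
  \sum_(e : A') cc e * \sum_(P <- P' | e \in P) z e P =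
  \sum_(P <- P') \sum_(e <- P) cc e * z e P.
Proof.
under eq_bigr => e _ do rewrite mulr_sumr big_mkcond.
rewrite exchange_big /=; apply: eq_big_seq => P PP.
rewrite (big_uniq _ (path_uniq PP)) [RHS]big_mkcond /=.
by apply: eq_bigr => e _; case: (e \in P).
Qed.

Lemma cost_emb (z : A' -> seq A' -> R) i j p :
  \sum_(e <- emb i j p) cc e * z e (emb i j p) =
  (i.+1)%:R * z (aa i) (emb i j p) + (j.+1)%:R * z (zz j) (emb i j p).
Proof. by rewrite sum_emb big1 ?addr0 // => a _; rewrite /cc /= mul0r. Qed.

Lemma zs_emb (z : A' -> seq A' -> R) i j p :
  (forall a, z (ol a) (emb i j p) = 0) ->
  \sum_(e <- emb i j p) z e (emb i j p) = z (aa i) (emb i j p) + z (zz j) (emb i j p).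
Proof. by move=> h; rewrite sum_emb big1 ?addr0. Qed.

Lemma diag_le (F : 'I_k -> 'I_k -> R) : (forall i j, 0 <= F i j) ->
  \sum_(i < k) F i i <= \sum_(i < k) \sum_(j < k) F i j.
Proof.
move=> h; apply: ler_sum => i _; rewrite (bigD1 i) //= lerDl.
by apply: sumr_ge0 => j _.
Qed.

Lemma max0_ge0 (a : R) : 0 <= Num.max 0 a.
Proof. by rewrite le_max lexx. Qed.
Lemma max0_ge (a : R) : a <= Num.max 0 a.
Proof. by rewrite le_max lexx orbT. Qed.

Lemma fwd_lower (x : seq A' -> R) (z : A' -> seq A' -> R) :
  x [:: es] = 1 ->
  (forall i, \sum_(p <- S i i) x (emb i i p) = d i) ->
  in_Omega tl' hd' (sS V) (tT V) (@cp R A k) (BIp d) z ->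
  1 <= Defs.val tl' hd' (sS V) (tT V) x z.
Proof.
move=> xes xd [zpos [znone zbud]].
have zol : forall i j p, p \in S i j -> forall a, z (ol a) (emb i j p) = 0.
  by move=> i j p ps a; apply: znone => //; exact: emb_in.
have zb : \sum_(P <- P') \sum_(e <- P) cc e * z e P <= BIp d by rewrite -budget_paths.
rewrite decomp big_seq1 in zb.
set C := \sum_(i < k) _ in zb.
pose W := \sum_(i < k) \sum_(p <- S i i) (i.+1)%:R * (z (aa i) (emb i i p) + z (zz i) (emb i i p)).
have hW : W <= C.
  pose F i j := \sum_(p <- S i j) \sum_(e <- emb i j p) cc e * z e (emb i j p).
  have hF : forall i j, 0 <= F i j.
    move=> i j; rewrite /F big_seq_cond; apply: sumr_ge0 => p /andP[ps _].
    by rewrite cost_emb; apply: addr_ge0; apply: mulr_ge0 => //; apply: zpos; exact: emb_in.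
  have h1 : W <= \sum_(i < k) F i i.
    by apply: ler_sum => i _; apply: ler_sum => p _; rewrite /F cost_emb mulrDr.
  exact: le_trans h1 (diag_le hF).
rewrite /Defs.val decomp big_seq1 xes.
pose Y := \sum_(i < k) \sum_(p <- S i i) Num.max 0 (x (emb i i p) - (z (aa i) (emb i i p) + z (zz i) (emb i i p))).
set Big := \sum_(i < k) _.
have hY : Y <= Big.
  pose G i j := \sum_(p <- S i j) Num.max 0 (x (emb i j p) - \sum_(e <- emb i j p) z e (emb i j p)).
  have hG : forall i j, 0 <= G i j by move=> i j; apply: sumr_ge0 => p _; exact: max0_ge0.
  have h1 : Y = \sum_(i < k) G i i.
    apply: eq_bigr => i _; apply: eq_big_seq => p ps; rewrite zs_emb //; exact: zol.
  rewrite h1; exact: diag_le hG.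
have h1 : BIp d <= \sum_(i < k) \sum_(p <- S i i) (i.+1)%:R * Num.max 0 (x (emb i i p) - (z (aa i) (emb i i p) + z (zz i) (emb i i p))) + W.
  rewrite /BIp /W -big_split /=; apply: ler_sum => i _.
  rewrite -xd mulr_sumr -big_split /=; apply: ler_sum => p _.
  rewrite -mulrDr; apply: ler_wpM2l => //.
  have := max0_ge (x (emb i i p) - (z (aa i) (emb i i p) + z (zz i) (emb i i p))); lra.
have h2 : \sum_(i < k) \sum_(p <- S i i) (i.+1)%:R * Num.max 0 (x (emb i i p) - (z (aa i) (emb i i p) + z (zz i) (emb i i p))) <= (k.+1)%:R * Y.
  rewrite /Y mulr_sumr; apply: ler_sum => i _; rewrite mulr_sumr; apply: ler_sum => p _.
  apply: ler_wpM2r; first exact: max0_ge0.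
  by rewrite ler_nat ltnS ltnW.
have h3 : (k.+1)%:R * z es [:: es] <= (k.+1)%:R * Y.
  move: zb; rewrite /cc /=; lra.
rewrite ler_pM2l ?ltr0Sn // in h3.
have := max0_ge (1 - z es [:: es]); lra.
Qed.

Lemma emb_neq i j p : (emb i j p == [:: es]) = false.
Proof. by apply/eqP => h; have := congr1 size h; rewrite /emb /= size_cat /= addn1. Qed.

Lemma fwd : mcf_feasible tl hd u src snk d ->
  exists x : seq A' -> R,
    feasible_pathflow tl' hd' (sS V) (tT V) (up u d) x /\
    min_val_eq tl' hd' (sS V) (tT V) (@cp R A k) (BIp d) x 1.
Proof.
case=> f [f0 [fd fcap]].
pose xf (P : seq A') := if P == [:: es] then 1 else
  match fidx P, lidx P with Some i, Some j => if i == j then f i (dec P) else 0 | _, _ => 0 end.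
have xes : xf [:: es] = 1 by rewrite /xf eqxx.
have xemb : forall i j p, xf (emb i j p) = if i == j then f i p else 0.
  by move=> i j p; rewrite /xf emb_neq fidx_emb lidx_emb dec_emb.
have xpos : forall P, P \in P' -> 0 <= xf P.
  move=> P /path_cases [->|[i [j [p [-> ps]]]]]; first by rewrite xes.
  rewrite xemb; case: eqP => [e|_] //; move: ps; rewrite -e; exact: f0.
have capaa : forall i0, \sum_(P <- P' | aa i0 \in P) xf P = d i0.
  move=> i0; rewrite arc_sum_aa -(fd i0).
  rewrite (eq_bigr (fun j => if i0 == j then \sum_(p <- S i0 j) f i0 p else 0)).
    exact: (sum_pick (fun j => \sum_(p <- S i0 j) f i0 p)).
  by move=> j _; rewrite -sum_if; apply: eq_bigr => p _; rewrite xemb.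
have capzz : forall j0, \sum_(P <- P' | zz j0 \in P) xf P = d j0.
  move=> j0; rewrite arc_sum_zz -(fd j0).
  rewrite (eq_bigr (fun i => if j0 == i then \sum_(p <- S i j0) f i p else 0)).
    exact: (sum_pick (fun i => \sum_(p <- S i j0) f i p)).
  by move=> i _; rewrite -sum_if; apply: eq_bigr => p _; rewrite xemb eq_sym.
have xd : forall i, \sum_(p <- S i i) xf (emb i i p) = d i.
  by move=> i; rewrite -(fd i); apply: eq_bigr => p _; rewrite xemb eqxx.
exists xf; split.
  split; first exact: xpos.
  case=> [a|[i|[j|[]]]].
  - rewrite arc_sum_ol /=; apply: le_trans (fcap a).
    rewrite le_eqVlt; apply/orP; left; apply/eqP; apply: eq_bigr => i _.
    rewrite (eq_bigr (fun j => if i == j then \sum_(p <- S i j | a \in p) f i p else 0)).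
      exact: (sum_pick (fun j => \sum_(p <- S i j | a \in p) f i p)).
    by move=> j _; rewrite -sum_if; apply: eq_bigr => p _; rewrite xemb.
  - by rewrite capaa.
  - by rewrite capzz.
  - by rewrite arc_sum_es xes.
pose z0 (e : A') (P : seq A') := match e with inr (inl _) => xf P | _ => 0 end.
split.
  exists z0; split.
    split; first by move=> [a|[i|[j|[]]]] P PP //=; exact: xpos.
    split; first by move=> [a|[i|[j|[]]]].
    rewrite !big_sumType /=.
    rewrite [X in X + _]big1; last by move=> a _; rewrite mul0r.
    rewrite [X in _ + (_ + (X + _))]big1; last by move=> j _; rewrite big1 ?mulr0.
    rewrite [X in _ + (_ + (_ + X))]big1; last by move=> [] _; rewrite big1 ?mulr0.
    rewrite add0r !addr0.
    rewrite /BIp le_eqVlt; apply/orP; left; apply/eqP; apply: eq_bigr => i _.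
    by rewrite -[in RHS](capaa i).
  rewrite /Defs.val decomp big_seq1 xes /= subr0 big1 ?addr0.
    by rewrite /Num.max ltr01.
  move=> i _; rewrite big1 // => j _; rewrite big1 // => p _.
  by rewrite zs_emb //= addr0 subrr /Num.max ltxx.
move=> z hz; exact: fwd_lower xes xd hz.
Qed.

Lemma psum0 (F : 'I_k -> R) : (forall i, 0 <= F i) -> \sum_(i < k) F i = 0 -> forall i, F i = 0.
Proof. by move=> h e i; apply: (psumr_eq0P (P := predT)). Qed.

Lemma rows_lemma (X : 'I_k -> 'I_k -> R) (D : 'I_k -> R) :
  (forall i j, 0 <= X i j) -> (forall i, \sum_(j < k) X i j <= D i) ->
  \sum_(i < k) \sum_(j < k) (minn i j).+1%:R * X i j = \sum_(i < k) (i.+1)%:R * D i ->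
  (forall i, \sum_(j < k) X i j = D i) /\ (forall i j : 'I_k, (j < i)%N -> X i j = 0).
Proof.
move=> X0 F1 E.
pose a (i j : 'I_k) := ((i.+1)%:R - (minn i j).+1%:R) * X i j.
pose b (i : 'I_k) := (i.+1)%:R * (D i - \sum_(j < k) X i j).
have a0 : forall i j, 0 <= a i j.
  move=> i j; apply: mulr_ge0 => //; rewrite subr_ge0 ler_nat ltnS; exact: geq_minl.
have b0 : forall i, 0 <= b i.
  by move=> i; apply: mulr_ge0 => //; rewrite subr_ge0.
have ei : forall i, \sum_(j < k) a i j + b i = (i.+1)%:R * D i - \sum_(j < k) (minn i j).+1%:R * X i j.
  move=> i; rewrite /a /b (eq_bigr (fun j => (i.+1)%:R * X i j - (minn i j).+1%:R * X i j)).
    by rewrite sumrB -mulr_sumr; ring.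
  by move=> j _; rewrite mulrBl.
have tot : \sum_(i < k) (\sum_(j < k) a i j + b i) = 0.
  by rewrite (eq_bigr _ (fun i _ => ei i)) sumrB E subrr.
have h0 := psum0 (fun i => addr_ge0 (sumr_ge0 _ (fun j _ => a0 i j)) (b0 i)) tot.
have hb : forall i, b i = 0.
  move=> i; have := h0 i; have := b0 i; have : 0 <= \sum_(j < k) a i j by apply: sumr_ge0.
  lra.
have ha : forall i j, a i j = 0.
  move=> i; apply: psum0 => // ; have := h0 i; rewrite hb; lra.
split.
  move=> i; have := hb i; rewrite /b => /eqP; rewrite mulf_eq0 pnatr_eq0 /= subr_eq0 => /eqP ->.
  done.
move=> i j ji; have := ha i j; rewrite /a => /eqP; rewrite mulf_eq0 => /orP[|/eqP//].
rewrite subr_eq0 eqr_nat eqSS => /eqP e; exfalso.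
have := geq_minr i j; rewrite -e; by rewrite leqNgt ji.
Qed.

Lemma diag_lemma (X : 'I_k -> 'I_k -> R) :
  (forall i j, 0 <= X i j) -> (forall i, \sum_(j < k) X i j <= d i) ->
  (forall j, \sum_(i < k) X i j <= d j) ->
  \sum_(i < k) \sum_(j < k) (minn i j).+1%:R * X i j = \sum_(i < k) (i.+1)%:R * d i ->
  forall i, X i i = d i.
Proof.
move=> X0 F1 F2 E.
have [r1 lo] := rows_lemma X0 F1 E.
have E' : \sum_(i < k) \sum_(j < k) (minn i j).+1%:R * X j i = \sum_(i < k) (i.+1)%:R * d i.
  rewrite -E exchange_big /=; apply: eq_bigr => i _; apply: eq_bigr => j _; by rewrite minnC.
have [_ up'] := rows_lemma (X := fun i j => X j i) (fun i j => X0 j i) F2 E'.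
move=> i; rewrite -(r1 i) (bigD1 i) //= big1 ?addr0 // => j ne.
case: (ltngtP i j) => [ij|ji|e]; first exact: up'.
  exact: lo.
by move: ne; rewrite (val_inj e) eqxx.
Qed.

Definition fi (P : seq A') : nat := if fidx P is Some i then i else 0.
Definition lj (P : seq A') : nat := if lidx P is Some j then j else 0.

Lemma bwd : (forall i, 0 <= d i) ->
  (exists x : seq A' -> R,
    feasible_pathflow tl' hd' (sS V) (tT V) (up u d) x /\
    min_val_eq tl' hd' (sS V) (tT V) (@cp R A k) (BIp d) x 1) ->
  mcf_feasible tl hd u src snk d.
Proof.
move=> hd0 [x [[xpos xcap] [_ xmin]]].
pose X i j := \sum_(p <- S i j) x (emb i j p).
have X0 : forall i j, 0 <= X i j.
  move=> i j; rewrite /X big_seq; apply: sumr_ge0 => p ps; apply: xpos; exact: emb_in.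
have F1 : forall i, \sum_(j < k) X i j <= d i.
  by move=> i; have := xcap (aa i); rewrite arc_sum_aa.
have F2 : forall j, \sum_(i < k) X i j <= d j.
  by move=> j; have := xcap (zz j); rewrite arc_sum_zz.
have F3 : x [:: es] <= 1 by have := xcap es; rewrite arc_sum_es.
pose Smin := \sum_(i < k) \sum_(j < k) (minn i j).+1%:R * X i j.
pose Bp := BIp d - Smin.
have hBp : 0 <= Bp.
  rewrite subr_ge0 /BIp /Smin; apply: ler_sum => i _.
  apply: (@le_trans _ _ ((i.+1)%:R * \sum_(j < k) X i j)); last by apply: ler_wpM2l.
  rewrite mulr_sumr; apply: ler_sum => j _; apply: ler_wpM2r => //.
  by rewrite ler_nat ltnS geq_minl.
have kpos : 0 < (k.+1)%:R :> R by rewrite ltr0Sn.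
pose zb (e : A') (P : seq A') : R := match e with
  | inr (inl i) => if (fi P <= lj P)%N then x P else 0
  | inr (inr (inl j)) => if (lj P < fi P)%N then x P else 0
  | inr (inr (inr _)) => Bp / (k.+1)%:R
  | inl _ => 0 end.
have zbO : in_Omega tl' hd' (sS V) (tT V) (@cp R A k) (BIp d) zb.
  split.
    move=> [a|[i|[j|[]]]] P PP /=; rewrite ?lexx //.
    - by case: ifP => _ //; exact: xpos.
    - by case: ifP => _ //; exact: xpos.
    - by apply: divr_ge0 => //; exact: ltW.
  split; first by move=> [a|[i|[j|[]]]].
  have ea : forall i, \sum_(P <- P' | aa i \in P) (if (fi P <= lj P)%N then x P else 0) = \sum_(j < k) (if (i <= j)%N then X i j else 0).
    move=> i; rewrite (arc_sum_aa (fun P => if (fi P <= lj P)%N then x P else 0)); apply: eq_bigr => j _.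
    by rewrite /X -sum_if; apply: eq_bigr => p _; rewrite /fi /lj fidx_emb lidx_emb.
  have ez : forall j, \sum_(P <- P' | zz j \in P) (if (lj P < fi P)%N then x P else 0) = \sum_(i < k) (if (j < i)%N then X i j else 0).
    move=> j; rewrite (arc_sum_zz (fun P => if (lj P < fi P)%N then x P else 0)); apply: eq_bigr => i _.
    by rewrite /X -sum_if; apply: eq_bigr => p _; rewrite /fi /lj fidx_emb lidx_emb.
  have ee : \sum_(P <- P' | es \in P) Bp / (k.+1)%:R = Bp / (k.+1)%:R by rewrite (arc_sum_es (fun _ => Bp / (k.+1)%:R)).
  rewrite !big_sumType /=.
  rewrite [X in X + _]big1; last by move=> a _; rewrite mul0r.
  rewrite add0r (big_pred1 tt) // ee.
  rewrite (eq_bigr (fun i : 'I_k => (i.+1)%:R * \sum_(j < k) (if (i <= j)%N then X i j else 0))); last first.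
    by move=> i _; rewrite -ea.
  rewrite [X in _ + (X + _)](eq_bigr (fun j : 'I_k => (j.+1)%:R * \sum_(i < k) (if (j < i)%N then X i j else 0))); last first.
    by move=> j _; rewrite -ez.
  have e1 : \sum_(i < k) (i.+1)%:R * \sum_(j < k) (if (i <= j)%N then X i j else 0) =
            \sum_(i < k) \sum_(j < k) (if (i <= j)%N then (i.+1)%:R * X i j else 0).
    apply: eq_bigr => i _; rewrite mulr_sumr; apply: eq_bigr => j _; by case: ifP; rewrite ?mulr0.
  have e2 : \sum_(j < k) (j.+1)%:R * \sum_(i < k) (if (j < i)%N then X i j else 0) =
            \sum_(i < k) \sum_(j < k) (if (j < i)%N then (j.+1)%:R * X i j else 0).
    rewrite [RHS]exchange_big /=.
    apply: eq_bigr => j _; rewrite mulr_sumr; apply: eq_bigr => i _; by case: ifP; rewrite ?mulr0.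
  have e3 : \sum_(i < k) \sum_(j < k) (if (i <= j)%N then (i.+1)%:R * X i j else 0) +
            \sum_(i < k) \sum_(j < k) (if (j < i)%N then (j.+1)%:R * X i j else 0) = Smin.
    rewrite -big_split; apply: eq_bigr => i _; rewrite -big_split; apply: eq_bigr => j _ /=.
    by case: leqP => h; rewrite ?addr0 ?add0r.
  rewrite e1 e2 mulrC divfK ?lt0r_neq0 //.
  move: e3; rewrite /Bp; lra.
have vz : Defs.val tl' hd' (sS V) (tT V) x zb = Num.max 0 (x [:: es] - Bp / (k.+1)%:R).
  rewrite /Defs.val decomp big_seq1 /= big1 ?addr0 // => i _.
  rewrite big1 // => j _; rewrite big1 // => p _.
  rewrite zs_emb //= /fi /lj fidx_emb lidx_emb.
  by case: leqP => _; rewrite ?addr0 ?add0r subrr /Num.max ltxx.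
have hB0 : Bp = 0.
  have := xmin zb zbO; rewrite vz le_max ler10 /= => h.
  have q0 : 0 <= Bp / (k.+1)%:R by apply: divr_ge0 => //; exact: ltW.
  have qz : Bp / (k.+1)%:R = 0 by move: h q0 F3; set q := Bp / _; lra.
  by move/eqP: qz; rewrite mulf_eq0 invr_eq0 pnatr_eq0 orbF => /eqP.
have E : Smin = BIp d by move: hB0; rewrite /Bp => /eqP; rewrite subr_eq0 => /eqP.
have XD := diag_lemma X0 F1 F2 E.
exists (fun i p => x (emb i i p)); split.
  by move=> i p ps; apply: xpos; exact: emb_in.
split; first exact: XD.
move=> a; have := xcap (ol a); rewrite arc_sum_ol; apply: le_trans.
pose G i j := \sum_(p <- S i j | a \in p) x (emb i j p).
have G0 : forall i j, 0 <= G i j.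
  move=> i j; rewrite /G big_seq_cond; apply: sumr_ge0 => p /andP[ps _]; apply: xpos; exact: emb_in.
exact: (diag_le G0).
Qed.
End Red.

Theorem lemma2 (R : realType) (V A : finType) (tl hd : A -> V) (u : A -> R)
  (hu : forall e, 0 <= u e) (k : nat) (src snk : 'I_k -> V) (d : 'I_k -> R)
  (hd0 : forall i, 0 <= d i) :
  mcf_feasible tl hd u src snk d <->
  exists x : seq (Ap A k) -> R,
    feasible_pathflow (tlp tl snk) (hdp hd src) (sS V) (tT V) (up u d) x /\
    min_val_eq (tlp tl snk) (hdp hd src) (sS V) (tT V)
      (@cp R A k) (BIp d) x 1.
Proof.
split; first exact: fwd.
exact: bwd.
Qed.
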